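(* Let $\{p_\sigma\}$ and $\{p'_\sigma\}$ be two systems of probability parameters indexed by the non-empty proper subsets $\sigma\subsetneq[n]$, with $p_\sigma\le p'_\sigma$ for all $\sigma$. Let $\underline{\mathbb P}_n,\underline{\mathbb P}'_n$ be the lower measures and $\overline{\mathbb P}_n,\overline{\mathbb P}'_n$ the upper measures on the set of simplicial subcomplexes of $\Delta_n$ associated to $\{p_\sigma\}$ and $\{p'_\sigma\}$ respectively. Let $\mathfrak P$ denote the set of pairs $(X,Y)$ of simplicial complexes $Y\subseteq X\subseteq\Delta_n$, with projections $\pi_1(X,Y)=X$, $\pi_2(X,Y)=Y$. (A) There exists a probability measure $\underline\mu$ on $\mathfrak P$ with $(\pi_1)_*\underline\mu=\underline{\mathbb P}'_n$ and $(\pi_2)_*\underline\mu=\underline{\mathbb P}_n$, and there exists a probability measure $\overline\mu$ on $\mathfrak P$ with $(\pi_1)_*\overline\mu=\overline{\mathbb P}'_n$ and $(\pi_2)_*\overline\mu=\overline{\mathbb P}_n$. (B) If additionally $p_\sigma=p'_\sigma$ for every simplex $\sigma$ of dimension $\le k$ (for an integer $k\ge0$), then $\underline\mu$ in (A) can be taken supported on pairs $(X,Y)$ with identical $k$-skeleta, $X^{(k)}=Y^{(k)}$. (C) If additionally $p_\sigma=p'_\sigma$ for every simplex $\sigma$ of dimension $>k$ (for a fixed integer $k$), then $\overline\mu$ in (A) can be taken supported on pairs $(X,Y)$ with $X-X^{(k)}=Y-Y^{(k)}$, i.e. $X$ and $Y$ have the same simplexes of dimension $>k$.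
   Context: $[n]=\{0,\dots,n\}$, $\Delta_n$ is the simplex consisting of all non-empty subsets of $[n]$; a simplex $\sigma$ has dimension $|\sigma|-1$. Given parameters $p_\sigma\in[0,1]$ for non-empty proper subsets $\sigma\subsetneq[n]$, let $X$ be the random hypergraph containing each such $\sigma$ independently with probability $p_\sigma$. The lower measure is the law of the largest simplicial complex contained in $X$ ($\sigma$ included iff all its non-empty subsets lie in $X$); the upper measure is the law of the smallest simplicial complex containing $X$ ($\sigma$ included iff some superset of $\sigma$ lies in $X$). $X^{(k)}$ denotes the $k$-skeleton. *)

(* Defs.v *)
(* Vertex set [n] = {0,...,n} is 'I_n.+1; a simplex is a
   non-empty {set 'I_n.+1}; a (sub)complex of Delta_n is a {set {set 'I_n.+1}}.
   Probability measures on the finite sets involved are given by their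
   probability mass functions, with values in an arbitrary realFieldType R. *)
From HB Require Import structures.
From mathcomp Require Import all_boot all_order all_algebra.
Set Implicit Arguments. Unset Strict Implicit. Unset Printing Implicit Defensive.
Import Order.TTheory GRing.Theory Num.Theory.
Local Open Scope ring_scope.

Section Defs.
Variable n : nat.
Local Notation V := 'I_n.+1.
Local Notation simp := {set V}.
Local Notation cplx := {set {set V}}.

(* non-empty proper subsets of [n]: the index set of the parameters *)
Definition proper_face (s : simp) : bool := (s != set0) && (s != setT).
Definition proper_faces : cplx := [set s | proper_face s].

Definition is_complex (K : cplx) : bool :=
  [forall s in K, (s != set0) &&
     [forall t : simp, ((t != set0) && (t \subset s)) ==> (t \in K)]].

(* law of the random hypergraph X: probability of a given hypergraph H
   (a set of non-empty proper subsets) *)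
Definition hyp_weight (R : realFieldType) (p : simp -> R) (H : cplx) : R :=
  \prod_(s | proper_face s) (if s \in H then p s else 1 - p s).

Definition lower_cplx (H : cplx) : cplx :=
  [set s : simp | (s != set0) &&
     [forall t : simp, ((t != set0) && (t \subset s)) ==> (t \in H)]].

Definition upper_cplx (H : cplx) : cplx :=
  [set s : simp | (s != set0) && [exists t : simp, (t \in H) && (s \subset t)]].

Definition lower_measure (R : realFieldType) (p : simp -> R) (K : cplx) : R :=
  \sum_(H : cplx | (H \subset proper_faces) && (lower_cplx H == K)) hyp_weight p H.
Definition upper_measure (R : realFieldType) (p : simp -> R) (K : cplx) : R :=
  \sum_(H : cplx | (H \subset proper_faces) && (upper_cplx H == K)) hyp_weight p H.

Definition pairsP (z : cplx * cplx) : bool :=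
  [&& is_complex z.1, is_complex z.2 & z.2 \subset z.1].

Definition is_coupling (R : realFieldType) (mu : cplx * cplx -> R)
    (P1 P2 : cplx -> R) : Prop :=
  [/\ (forall z, 0 <= mu z),
      \sum_(z : cplx * cplx) mu z = 1,
      (forall z, mu z != 0 -> pairsP z),
      (forall X : cplx, \sum_(Y : cplx) mu (X, Y) = P1 X) &
      (forall Y : cplx, \sum_(X : cplx) mu (X, Y) = P2 Y)].

(* k-skeleton: simplices of dimension <= k, i.e. of cardinality <= k+1 *)
Definition skeleton (k : nat) (K : cplx) : cplx := [set s in K | #|s| <= k.+1]%N.

Definition above_dim (k : int) (K : cplx) : cplx :=
  [set s in K | k < (#|s|%:Z - 1)].
End Defs.

(* Main.v *)
Require Import Defs.
From mathcomp Require Import all_boot all_order all_algebra.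
Set Implicit Arguments. Unset Strict Implicit. Unset Printing Implicit Defensive.
Import Order.TTheory GRing.Theory Num.Theory.
Local Open Scope ring_scope.

Section Coup.
Variables (R : realFieldType) (n : nat) (p p' : {set 'I_n.+1} -> R).
Local Notation simp := {set 'I_n.+1}.
Local Notation cplx := {set {set 'I_n.+1}}.
Hypothesis hp : forall s, proper_face s -> 0 <= p s <= 1.
Hypothesis hp' : forall s, proper_face s -> 0 <= p' s <= 1.
Hypothesis hpp : forall s, proper_face s -> p s <= p' s.

Local Notation st := (bool * bool)%type.

Definition qv (s : simp) (j : st) : R :=
  if proper_face s then
    match j with
    | (true, true) => p s | (true, false) => p' s - p s
    | (false, false) => 1 - p' s | (false, true) => 0 end
  else (if j == (false, false) then 1 else 0).

Definition W (f : {ffun simp -> st}) : R := \prod_s qv s (f s).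
Definition Hp (f : {ffun simp -> st}) : cplx := [set s | (f s).1].
Definition Hl (f : {ffun simp -> st}) : cplx := [set s | (f s).2].

Lemma sum_st (F : st -> R) :
  \sum_(j : st) F j = F (true,true) + F (true,false) + F (false,true) + F (false,false).
Proof.
have := pair_bigA _ (fun a b => F (a, b)) => /=.
move=> h; rewrite (eq_bigr (fun j => F (j.1, j.2))); last by case.
rewrite -h !big_bool /= !addrA. by [].
Qed.

Lemma qv_ge0 s j : 0 <= qv s j.
Proof.
rewrite /qv; case: ifP => [pf|_]; last by case: ifP.
have := hp pf; have := hp' pf; have := hpp pf.
case: j => [[] []] /= => h1 /andP[h2 h3] /andP[h4 h5]; rewrite ?subr_ge0 //.
Qed.

Lemma W_ge0 f : 0 <= W f.
Proof. by apply: prodr_ge0 => s _; apply: qv_ge0. Qed.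

Lemma sum_W : \sum_f W f = 1.
Proof.
rewrite /W -bigA_distr_bigA /=; apply: big1 => s _.
rewrite sum_st /qv; case: ifP => _ /=; last by rewrite !addr0 add0r.
by rewrite addr0 !subrKC.
Qed.

Lemma sum_Hp (H : cplx) :
  \sum_(f | Hp f == H) W f = if H \subset proper_faces n then hyp_weight p' H else 0.
Proof.
rewrite (eq_bigl (fun f => f \in family (fun s j => j.1 == (s \in H)))); last first.
  move=> f; apply/eqP/forallP => [<- x|h]; first by rewrite /finfun.fmem /= !inE unfold_in /=.
  by apply/setP => x; have := h x; rewrite /finfun.fmem /= !inE => /eqP.
rewrite /W -bigA_distr_big_dep /= (bigID (fun s => proper_face s)) /=.
have -> : \prod_(i | proper_face i) \sum_(j | j.1 == (i \in H)) qv i j = hyp_weight p' H.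
  apply: eq_bigr => s pf; rewrite big_mkcond sum_st /qv pf /=.
  by case: (s \in H) => /=; rewrite ?addr0 ?add0r // addrC subrK.
case: ifP => sub.
  rewrite big1 ?mulr1 // => s npf; rewrite big_mkcond sum_st /qv (negbTE npf) /=.
  have -> : (s \in H) = false.
    by apply/negbTE; apply: contra npf => sH; have := subsetP sub _ sH; rewrite inE.
  by rewrite /= !add0r.
have [s sH npf] : exists2 s, s \in H & ~~ proper_face s.
  move/negbT: sub => /subsetPn [s sH]; rewrite inE => npf; by exists s.
rewrite (bigD1 s) //= big_mkcond sum_st /qv (negbTE npf) sH /=.
by rewrite !addr0 mul0r mulr0.
Qed.

Lemma sum_Hl (H : cplx) :
  \sum_(f | Hl f == H) W f = if H \subset proper_faces n then hyp_weight p H else 0.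
Proof.
rewrite (eq_bigl (fun f => f \in family (fun s j => j.2 == (s \in H)))); last first.
  move=> f; apply/eqP/forallP => [<- x|h]; first by rewrite /finfun.fmem /= !inE unfold_in /=.
  by apply/setP => x; have := h x; rewrite /finfun.fmem /= !inE => /eqP.
rewrite /W -bigA_distr_big_dep /= (bigID (fun s => proper_face s)) /=.
have -> : \prod_(i | proper_face i) \sum_(j | j.2 == (i \in H)) qv i j = hyp_weight p H.
  apply: eq_bigr => s pf; rewrite big_mkcond sum_st /qv pf /=.
  case: (s \in H) => /=; rewrite ?addr0 ?add0r //.
  by rewrite addrC addrA subrK.
case: ifP => sub.
  rewrite big1 ?mulr1 // => s npf; rewrite big_mkcond sum_st /qv (negbTE npf) /=.
  have -> : (s \in H) = false.
    by apply/negbTE; apply: contra npf => sH; have := subsetP sub _ sH; rewrite inE.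
  by rewrite /= !add0r.
have [s sH npf] : exists2 s, s \in H & ~~ proper_face s.
  move/negbT: sub => /subsetPn [s sH]; rewrite inE => npf; by exists s.
rewrite (bigD1 s) //= big_mkcond sum_st /qv (negbTE npf) sH /=.
by rewrite ?addr0 ?mul0r mulr0.
Qed.


Lemma W_supp f : W f != 0 ->
  [/\ Hl f \subset Hp f, Hp f \subset proper_faces n &
      forall s, s \in Hp f -> s \notin Hl f -> p s != p' s].
Proof.
move=> Wf.
have hq s : qv s (f s) != 0.
  by apply: contra Wf => /eqP q0; rewrite /W (bigD1 s) //= q0 mul0r.
split.
- apply/subsetP => s; have := hq s; rewrite /qv !inE.
  by case: (f s) => [[] []] /=; case: ifP => //=; rewrite eqxx.
- apply/subsetP => s; have := hq s; rewrite /qv !inE.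
  by case: (f s) => [[] []] /=; case: ifP => //=; rewrite eqxx.
- move=> s; have := hq s; rewrite /qv !inE.
  case: (f s) => [[] []] //=; case: ifP => //= _.
  all: by rewrite ?eqxx // subr_eq0 eq_sym => h.
Qed.

Definition meas (L : cplx -> cplx) (p0 : simp -> R) (K : cplx) : R :=
  \sum_(H : cplx | (H \subset proper_faces n) && (L H == K)) hyp_weight p0 H.
Definition mu (L : cplx -> cplx) (z : cplx * cplx) : R :=
  \sum_(f | (L (Hp f), L (Hl f)) == z) W f.

Lemma marg1 (L : cplx -> cplx) X : \sum_Y mu L (X, Y) = meas L p' X.
Proof.
rewrite /mu.
transitivity (\sum_(f | L (Hp f) == X) W f).
  rewrite [RHS](partition_big (fun f => L (Hl f)) predT) //=.
rewrite (partition_big Hp predT) //= /meas [RHS]big_mkcond /=.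
apply: eq_bigr => H _.
case: (L H =P X) => [LX|nLX].
  rewrite (eq_bigl (fun f => Hp f == H)); last first.
    by move=> f; case: (Hp f =P H) => [->|]; rewrite ?LX ?eqxx ?andbF.
  by rewrite sum_Hp andbT.
rewrite andbF big1 // => f /andP[/eqP e /eqP e']; by subst.
Qed.

Lemma marg2 (L : cplx -> cplx) Y : \sum_X mu L (X, Y) = meas L p Y.
Proof.
rewrite /mu.
transitivity (\sum_(f | L (Hl f) == Y) W f).
  rewrite [RHS](partition_big (fun f => L (Hp f)) predT) //=.
  by apply: eq_big => // X _; apply: eq_bigl => f; rewrite xpair_eqE andbC.
rewrite (partition_big Hl predT) //= /meas [RHS]big_mkcond /=.
apply: eq_bigr => H _.
case: (L H =P Y) => [LY|nLY].
  rewrite (eq_bigl (fun f => Hl f == H)); last first.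
    by move=> f; case: (Hl f =P H) => [->|]; rewrite ?LY ?eqxx ?andbF.
  by rewrite sum_Hl andbT.
rewrite andbF big1 // => f /andP[/eqP e /eqP e']; by subst.
Qed.

Lemma mu_supp (L : cplx -> cplx) z : mu L z != 0 -> exists f, W f != 0 /\ z = (L (Hp f), L (Hl f)).
Proof.
move=> nz.
have [f /andP[/eqP e Wf]|none] := pickP (fun f => ((L (Hp f), L (Hl f)) == z) && (W f != 0)).
  by exists f.
by case/eqP: nz; apply: big1 => f ez; have := none f; rewrite ez /= => /negbFE/eqP.
Qed.

Lemma coup_gen (L : cplx -> cplx) : (forall H, is_complex (L H)) ->
  (forall H1 H2 : cplx, H1 \subset H2 -> L H1 \subset L H2) ->
  is_coupling (mu L) (meas L p') (meas L p).
Proof.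
move=> cL mL; split.
- by move=> z; apply: sumr_ge0 => f _; apply: W_ge0.
- rewrite -sum_W (partition_big (fun f => (L (Hp f), L (Hl f))) predT) //=.
- move=> z /mu_supp [f [Wf ->]]; have [s1 _ _] := W_supp Wf.
  by rewrite /pairsP /= !cL mL.
- exact: marg1.
- exact: marg2.
Qed.

End Coup.

Section Cplx.
Variable n : nat.
Local Notation cplx := {set {set 'I_n.+1}}.

Lemma lower_complex (H : cplx) : is_complex (lower_cplx H).
Proof.
apply/forallP => s; apply/implyP; rewrite inE => /andP[s0 /forallP hs].
rewrite s0 /=; apply/forallP => t; apply/implyP => /andP[t0 ts].
rewrite inE t0 /=; apply/forallP => u; apply/implyP => /andP[u0 ut].
by apply: (implyP (hs u)); rewrite u0 (subset_trans ut ts).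
Qed.

Lemma upper_complex (H : cplx) : is_complex (upper_cplx H).
Proof.
apply/forallP => s; apply/implyP; rewrite inE => /andP[s0 /existsP [t /andP[tH st]]].
rewrite s0 /=; apply/forallP => u; apply/implyP => /andP[u0 us].
by rewrite inE u0 /=; apply/existsP; exists t; rewrite tH (subset_trans us st).
Qed.

Lemma lower_mono (H1 H2 : cplx) : H1 \subset H2 -> lower_cplx H1 \subset lower_cplx H2.
Proof.
move=> sub; apply/subsetP => s; rewrite !inE => /andP[s0 /forallP h].
rewrite s0 /=; apply/forallP => t; apply/implyP => /(implyP (h t)).
exact: (subsetP sub).
Qed.

Lemma upper_mono (H1 H2 : cplx) : H1 \subset H2 -> upper_cplx H1 \subset upper_cplx H2.
Proof.
move=> sub; apply/subsetP => s; rewrite !inE => /andP[s0 /existsP [t /andP[tH st]]].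
by rewrite s0 /=; apply/existsP; exists t; rewrite (subsetP sub _ tH).
Qed.
End Cplx.

Theorem theorem4p1 (R : realFieldType) (n : nat) (p p' : {set 'I_n.+1} -> R) :
  (forall s, proper_face s -> 0 <= p s <= 1) ->
  (forall s, proper_face s -> 0 <= p' s <= 1) ->
  (forall s, proper_face s -> p s <= p' s) ->
  (* (A) *)
  ((exists mu, is_coupling mu (lower_measure p') (lower_measure p)) /\
   (exists mu, is_coupling mu (upper_measure p') (upper_measure p))) /\
  (* (B) *)
  (forall k : nat,
     (forall s, proper_face s -> (#|s| <= k.+1)%N -> p s = p' s) ->
     exists mu, is_coupling mu (lower_measure p') (lower_measure p) /\
       (forall z, mu z != 0 -> skeleton k z.1 = skeleton k z.2)) /\
  (* (C) *)
  (forall k : int,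
     (forall s, proper_face s -> k < #|s|%:Z - 1 -> p s = p' s) ->
     exists mu, is_coupling mu (upper_measure p') (upper_measure p) /\
       (forall z, mu z != 0 -> above_dim k z.1 = above_dim k z.2)).
Proof.
move=> hp hp' hpp.
have cl := coup_gen hp hp' hpp (@lower_complex n) (@lower_mono n).
have cu := coup_gen hp hp' hpp (@upper_complex n) (@upper_mono n).
split; first by split; [exists (mu p p' (@lower_cplx n)) | exists (mu p p' (@upper_cplx n))].
split.
  move=> k hk; exists (mu p p' (@lower_cplx n)); split => // z.
  move=> /mu_supp [f [Wf ->]] /=; have [sub subA diff] := W_supp Wf.
  have key t : t \in Hp f -> (#|t| <= k.+1)%N -> t \in Hl f.
    move=> tp tk; apply: contraT => tl; have := diff t tp tl.
    have pt : proper_face t by have := subsetP subA _ tp; rewrite inE.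
    by rewrite hk // eqxx.
  apply/setP => s; rewrite !inE.
  case: (leqP #|s| k.+1) => hs; last by rewrite !andbF.
  rewrite !andbT; congr (_ && _); apply: eq_forallb => t.
  apply/implyP/implyP => h /andP[t0 ts].
    by apply: key; [apply: h; rewrite t0 ts | apply: leq_trans (subset_leq_card ts) hs].
  by apply: (subsetP sub); apply: h; rewrite t0 ts.
move=> k hk; exists (mu p p' (@upper_cplx n)); split => // z.
move=> /mu_supp [f [Wf ->]] /=; have [sub subA diff] := W_supp Wf.
have key t : t \in Hp f -> k < #|t|%:Z - 1 -> t \in Hl f.
  move=> tp tk; apply: contraT => tl; have := diff t tp tl.
  have pt : proper_face t by have := subsetP subA _ tp; rewrite inE.
  by rewrite hk // eqxx.
apply/setP => s; rewrite !inE.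
case hs: (k < #|s|%:Z - 1); last by rewrite !andbF.
rewrite !andbT; congr (_ && _).
apply/existsP/existsP => [[t /andP[tH st]]|[t /andP[tH st]]]; exists t; rewrite st andbT.
  apply: key => //; apply: (lt_le_trans hs).
  by rewrite lerD2r lez_nat subset_leq_card.
exact: (subsetP sub).
Qed.
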